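(* Let $(\alpha,\beta)\in\Delta_K$ and $n\in\mathbb{Z}_{\ge0}$. Let $M_n=A_{\varepsilon_0}\cdots A_{\varepsilon_{n-1}}S=\begin{pmatrix}p''_n&p'_n&p_n\\ q''_n&q'_n&q_n\\ r''_n&r'_n&r_n\end{pmatrix}$, where $\varepsilon_k=\varepsilon(T^k(\alpha,\beta))$ (and $M_0=S$), and let $\delta_n(\alpha,\beta)$ be the set of interior points of the triangle in $\mathbb{R}^2$ with vertices $(q_n/p_n,r_n/p_n)$, $(q'_n/p'_n,r'_n/p'_n)$, $(q''_n/p''_n,r''_n/p''_n)$. Then $(\alpha,\beta)\in\delta_n(\alpha,\beta)$.
   Context: Let $K\subset\mathbb{R}$ be a real cubic number field, $N=N_{K/\mathbb{Q}}$ its norm. Fix $r=p/q$ with $p,q$ positive coprime integers and $3\nmid p$. Let $\Delta_K=\{(\alpha,\beta)\in K^2:\ 1,\alpha,\beta \text{ linearly independent over }\mathbb{Q},\ \alpha,\beta>0,\ \alpha+\beta<1\}$ and $Ind=\{(i,j): i,j\in\{0,1,2\},\ i\neq j\}$. Let $\Delta=\{(x,y)\in\mathbb{R}^2: x,y\ge 0,\ x+y\le 1\}$ and $\triangle(1,2)=\{(x,y)\in\Delta: x\ge y\}$, $\triangle(2,1)=\{x\le y\}$, $\triangle(0,1)=\{2x+y-1\le 0\}$, $\triangle(1,0)=\{2x+y-1\ge 0\}$, $\triangle(0,2)=\{x+2y-1\le0\}$, $\triangle(2,0)=\{x+2y-1\ge 0\}$ (all subsets of $\Delta$). Maps $T_{(i,j)}:\triangle(i,j)\to\Delta$: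 $T_{(1,2)}(x,y)=(\frac{x-y}{1-y},\frac{y}{1-y})$, $T_{(2,1)}(x,y)=(\frac{x}{1-x},\frac{y-x}{1-x})$, $T_{(0,1)}(x,y)=(\frac{x}{1-x},\frac{y}{1-x})$, $T_{(1,0)}(x,y)=(\frac{2x+y-1}{x+y},\frac{y}{x+y})$, $T_{(0,2)}(x,y)=(\frac{x}{1-y},\frac{y}{1-y})$, $T_{(2,0)}(x,y)=(\frac{x}{x+y},\frac{x+2y-1}{x+y})$. For $(\alpha,\beta)\in\Delta_K$ put $\gamma=1-\alpha-\beta$ and $v_{\{1,2\}}=\frac{\alpha^r\beta^r}{|N(\alpha)N(\beta)|}$, $v_{\{0,1\}}=\frac{\alpha^r\gamma^r}{|N(\alpha)N(\gamma)|}$, $v_{\{0,2\}}=\frac{\beta^r\gamma^r}{|N(\beta)N(\gamma)|}$; the maximum is attained at a unique pair $\{i_0,j_0\}$. $\varepsilon(\alpha,\beta)$ is the ordered pair $(i,j)\in Ind$ with $\{i,j\}=\{i_0,j_0\}$ and $(\alpha,\beta)\in\triangle(i,j)$, and $T(\alpha,\beta)=T_{\varepsilon(\alpha,\beta)}(\alpha,\beta)$ (a map $\Delta_K\to\Delta_K$). Matrices: $A_{(1,2)}=\begin{pmatrix}1&0&1\\0&1&1\\0&0&1\end{pmatrix}$, $A_{(2,1)}=\begin{pmatrix}1&1&0\\0&1&0\\0&1&1\end{pmatrix}$, $A_{(0,1)}=\begin{pmatrix}1&1&0\\0&1&0\\0&0&1\end{pmatrix}$, $A_{(1,0)}=\begin{pmatrix}2&-1&-1\\1&0&-1\\0&0&1\end{pmatrix}$,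 $A_{(0,2)}=\begin{pmatrix}1&0&1\\0&1&0\\0&0&1\end{pmatrix}$, $A_{(2,0)}=\begin{pmatrix}2&-1&-1\\0&1&0\\1&-1&0\end{pmatrix}$, $S=\begin{pmatrix}1&1&1\\0&1&0\\0&0&1\end{pmatrix}$. *)

(* Defs.v *)
From HB Require Import structures.
From mathcomp Require Import all_boot all_order all_algebra.
From mathcomp Require Import all_classical all_reals all_analysis.
Set Implicit Arguments.
Unset Strict Implicit.
Unset Printing Implicit Defensive.
Import Order.TTheory GRing.Theory Num.Theory.
Import numFieldNormedType.Exports.
Local Open Scope classical_set_scope.
Local Open Scope ring_scope.

Section Defs.
Variable R : realType.

Definition Qindep3 (b : 'I_3 -> R) : Prop :=
  forall c : 'I_3 -> rat, \sum_(i < 3) ratr (c i) * b i = 0 -> forall i, c i = 0.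

Definition Qbasis (K : set R) (b : 'I_3 -> R) : Prop :=
  Qindep3 b /\
  K = [set x | exists c : 'I_3 -> rat, x = \sum_(i < 3) ratr (c i) * b i].

Definition subfieldR (K : set R) : Prop :=
  K 1 /\ (forall x y, K x -> K y -> K (x + y)) /\ (forall x, K x -> K (- x)) /\
  (forall x y, K x -> K y -> K (x * y)) /\ (forall x, K x -> x != 0 -> K x^-1).

Definition real_cubic_field (K : set R) : Prop :=
  subfieldR K /\ exists b, Qbasis K b.

(* N is the norm N_{K/Q} on K: N x = det of the Q-linear map y |-> x y of K,
   computed in any Q-basis of K (the matrix acts on row coordinate vectors). *)
Definition is_norm (K : set R) (N : R -> R) : Prop :=
  forall b, Qbasis K b -> forall x, K x ->
  forall M : 'M[rat]_3,
    (forall i, x * b i = \sum_(j < 3) ratr (M i j) * b j) ->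
    N x = ratr (\det M).

Definition DeltaK (K : set R) (a b : R) : Prop :=
  K a /\ K b /\
  (forall c0 c1 c2 : rat, ratr c0 + ratr c1 * a + ratr c2 * b = 0 ->
     c0 = 0 /\ c1 = 0 /\ c2 = 0) /\
  0 < a /\ 0 < b /\ a + b < 1.

Inductive ind := I12 | I21 | I01 | I10 | I02 | I20.

Definition vpair (N : R -> R) (r x y : R) : R :=
  x `^ r * y `^ r / `|N x * N y|.

(* epsilon(x,y); the maximizing pair is unique, ties are broken
   arbitrarily (first {1,2}, then {0,1}). *)
Definition eps (N : R -> R) (r : R) (xy : R * R) : ind :=
  let x := xy.1 in let y := xy.2 in let g := 1 - x - y in
  let v12 := vpair N r x y in
  let v01 := vpair N r x g in
  let v02 := vpair N r y g in
  if (v01 <= v12) && (v02 <= v12) then (if y <= x then I12 else I21)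
  else if v02 <= v01 then (if 2 * x + y - 1 <= 0 then I01 else I10)
  else (if x + 2 * y - 1 <= 0 then I02 else I20).

Definition Tmap (e : ind) (xy : R * R) : R * R :=
  let x := xy.1 in let y := xy.2 in
  match e with
  | I12 => ((x - y) / (1 - y), y / (1 - y))
  | I21 => (x / (1 - x), (y - x) / (1 - x))
  | I01 => (x / (1 - x), y / (1 - x))
  | I10 => ((2 * x + y - 1) / (x + y), y / (x + y))
  | I02 => (x / (1 - y), y / (1 - y))
  | I20 => (x / (x + y), (x + 2 * y - 1) / (x + y))
  end.

Definition T (N : R -> R) (r : R) (xy : R * R) : R * R := Tmap (eps N r xy) xy.

Definition mx3 (a b c d e f g h i : R) : 'M[R]_3 :=
  \matrix_(k < 3, l < 3)
    nth 0 (nth [::] [:: [:: a; b; c]; [:: d; e; f]; [:: g; h; i]] k) l.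

Definition Amx (e : ind) : 'M[R]_3 :=
  match e with
  | I12 => mx3 1 0 1  0 1 1  0 0 1
  | I21 => mx3 1 1 0  0 1 0  0 1 1
  | I01 => mx3 1 1 0  0 1 0  0 0 1
  | I10 => mx3 2 (-1) (-1)  1 0 (-1)  0 0 1
  | I02 => mx3 1 0 1  0 1 0  0 0 1
  | I20 => mx3 2 (-1) (-1)  0 1 0  1 (-1) 0
  end.

Definition Smx : 'M[R]_3 := mx3 1 1 1  0 1 0  0 0 1.

Definition Mn (N : R -> R) (r : R) (ab : R * R) (n : nat) : 'M[R]_3 :=
  foldr (fun k acc => Amx (eps N r (iter k (T N r) ab)) *m acc) Smx (iota 0 n).

Definition vertex (M : 'M[R]_3) (j : 'I_3) : R * R :=
  (M 1 j / M 0 j, M 2%:R j / M 0 j).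

Definition triangle (M : 'M[R]_3) : set (R * R) :=
  [set z | exists l : 'I_3 -> R, (forall i, 0 <= l i) /\ \sum_(i < 3) l i = 1 /\
     z = (\sum_(i < 3) l i * (vertex M i).1, \sum_(i < 3) l i * (vertex M i).2)].

Definition delta_n (N : R -> R) (r : R) (ab : R * R) (n : nat) : set (R * R) :=
  interior (triangle (Mn N r ab n)).

End Defs.

(* Main.v *)
Require Import Defs.
From HB Require Import structures.
From mathcomp Require Import all_boot all_order all_algebra.
From mathcomp Require Import all_classical all_reals all_analysis.
From mathcomp Require Import ring lra.
Import Order.TTheory GRing.Theory Num.Theory.
Import numFieldNormedType.Exports.
Local Open Scope classical_set_scope.
Local Open Scope ring_scope.

Section S.
Variable R : realType.

Lemma sum3 (F : 'I_3 -> R) : \sum_(j < 3) F j = F 0 + F 1 + F 2%:R.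
Proof. by rewrite !big_ord_recr big_ord0 /= add0r; congr (_ + _ + _); congr F; apply: val_inj. Qed.

Lemma ord3_ind (P : 'I_3 -> Prop) : P 0 -> P 1 -> P 2%:R -> forall j, P j.
Proof.
move=> h0 h1 h2 [[|[|[|//]]] hj].
- by have -> : Ordinal hj = 0 by apply: val_inj.
- by have -> : Ordinal hj = 1 by apply: val_inj.
- by have -> : Ordinal hj = 2%:R by apply: val_inj.
Qed.

Lemma mulmx3 (a b c d e f g h i : R) (M : 'M[R]_3) j :
  [/\ (mx3 a b c d e f g h i *m M) 0 j = a * M 0 j + b * M 1 j + c * M 2%:R j,
      (mx3 a b c d e f g h i *m M) 1 j = d * M 0 j + e * M 1 j + f * M 2%:R j &
      (mx3 a b c d e f g h i *m M) 2%:R j = g * M 0 j + h * M 1 j + i * M 2%:R j].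
Proof. by rewrite !mxE !sum3 !mxE. Qed.

Ltac mxcheck := apply/matrixP => [[[|[|[|//]]] ?] [[|[|[|//]]] ?]];
  rewrite !mxE sum3 !mxE /=; ring.

Lemma test : mx3 (0:R) 1 1 (-1) 2 1 0 0 1 *m mx3 2 (-1) (-1) 1 0 (-1) 0 0 1 = 1%:M.
Proof. mxcheck. Qed.


Definition indep (x y : R) := forall c0 c1 c2 : rat,
  ratr c0 + ratr c1 * x + ratr c2 * y = 0 -> c0 = 0 /\ c1 = 0 /\ c2 = 0.
Definition Inv (xy : R * R) := 0 < xy.1 /\ 0 < xy.2 /\ xy.1 + xy.2 < 1 /\ indep xy.1 xy.2.
Definition colok (M : 'M[R]_3) :=
  forall j, 0 <= M 1 j /\ 0 <= M 2%:R j /\ M 1 j + M 2%:R j <= M 0 j.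
Definition Good (xy : R * R) (M : 'M[R]_3) :=
  colok M /\ (exists B, B *m M = 1%:M) /\
  exists c : 'I_3 -> R, (forall j, 0 < c j) /\ \sum_j M 0 j * c j = 1 /\
     \sum_j M 1 j * c j = xy.1 /\ \sum_j M 2%:R j * c j = xy.2.

Lemma lin_id (a b c m00 m01 m02 m10 m11 m12 m20 m21 m22 c0 c1 c2 k : R) :
  (a * m00 + b * m10 + c * m20) * (c0 / k) + (a * m01 + b * m11 + c * m21) * (c1 / k)
  + (a * m02 + b * m12 + c * m22) * (c2 / k) =
  (a * (m00 * c0 + m01 * c1 + m02 * c2) + b * (m10 * c0 + m11 * c1 + m12 * c2)
   + c * (m20 * c0 + m21 * c1 + m22 * c2)) / k.
Proof. ring. Qed.

Lemma good_step (a b c d e f g h i : R) (B : 'M[R]_3) x y x' y' k M :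
  B *m mx3 a b c d e f g h i = 1%:M ->
  (forall m0 m1 m2, 0 <= m1 -> 0 <= m2 -> m1 + m2 <= m0 ->
     0 <= d * m0 + e * m1 + f * m2 /\ 0 <= g * m0 + h * m1 + i * m2 /\
     (d * m0 + e * m1 + f * m2) + (g * m0 + h * m1 + i * m2) <= a * m0 + b * m1 + c * m2) ->
  0 < k -> a + b * x' + c * y' = k -> d + e * x' + f * y' = k * x ->
  g + h * x' + i * y' = k * y ->
  Good (x', y') M -> Good (x, y) (mx3 a b c d e f g h i *m M).
Proof.
move=> hB hcol hk h0 h1 h2 [hM [[N hN] [cc [hc [s0 [s1 s2]]]]]].
have kk : k != 0 by rewrite gt_eqF.
split; [|split].
- move=> j; have [e0 e1 e2] := mulmx3 a b c d e f g h i M j.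
  rewrite e0 e1 e2; have [p1 [p2 p3]] := hM j; exact: hcol.
- exists (N *m B); by rewrite -mulmxA (mulmxA B) hB mul1mx.
- exists (fun j => cc j / k); split; first by move=> j; apply: divr_gt0.
  rewrite /= !sum3 in s0 s1 s2 *.
  have [e00 e10 e20] := mulmx3 a b c d e f g h i M 0.
  have [e01 e11 e21] := mulmx3 a b c d e f g h i M 1.
  have [e02 e12 e22] := mulmx3 a b c d e f g h i M 2%:R.
  rewrite e00 e10 e20 e01 e11 e21 e02 e12 e22 !lin_id s0 s1 s2 !mulr1.
  rewrite h0 h1 h2; by split; [rewrite divff | split; rewrite mulrAC divff // mul1r].
Qed.


Lemma indep_step x y (d0 d1 d2 p0 p1 p2 q0 q1 q2 : rat) :
  (forall c0 c1 c2 : rat, c0 * d0 + c1 * p0 + c2 * q0 = 0 ->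
     c0 * d1 + c1 * p1 + c2 * q1 = 0 -> c0 * d2 + c1 * p2 + c2 * q2 = 0 ->
     c0 = 0 /\ c1 = 0 /\ c2 = 0) ->
  ratr d0 + ratr d1 * x + ratr d2 * y != 0 :> R ->
  indep x y ->
  indep ((ratr p0 + ratr p1 * x + ratr p2 * y) / (ratr d0 + ratr d1 * x + ratr d2 * y))
        ((ratr q0 + ratr q1 * x + ratr q2 * y) / (ratr d0 + ratr d1 * x + ratr d2 * y)).
Proof.
move=> hsys hD hind c0 c1 c2 h.
set D := ratr d0 + ratr d1 * x + ratr d2 * y in hD h.
have h' : ratr (c0 * d0 + c1 * p0 + c2 * q0) + ratr (c0 * d1 + c1 * p1 + c2 * q1) * x
   + ratr (c0 * d2 + c1 * p2 + c2 * q2) * y = 0 :> R.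
  rewrite !rmorphD !rmorphM /=.
  have -> : 0 = (ratr c0 + ratr c1 * ((ratr p0 + ratr p1 * x + ratr p2 * y) / D) +
      ratr c2 * ((ratr q0 + ratr q1 * x + ratr q2 * y) / D)) * D :> R by rewrite h mul0r.
  rewrite /D; field; exact: hD.
have [e0 [e1 e2]] := hind _ _ _ h'.
exact: hsys.
Qed.

Lemma frac_inv (D X Y : R) : 0 < D -> 0 < X -> 0 < Y -> X + Y < D ->
  0 < X / D /\ 0 < Y / D /\ X / D + Y / D < 1.
Proof.
move=> hD hX hY hs; split; [exact: divr_gt0|split; [exact: divr_gt0|]].
by rewrite -mulrDl ltr_pdivrMr // mul1r.
Qed.

Definition region (e : ind) (x y : R) : Prop :=
  match e with
  | I12 => y <= x | I21 => x < y | I01 => 2 * x + y - 1 <= 0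
  | I10 => 0 < 2 * x + y - 1 | I02 => x + 2 * y - 1 <= 0 | I20 => 0 < x + 2 * y - 1
  end.

Lemma eps_region N r x y : region (eps N r (x, y)) x y.
Proof.
rewrite /eps /=.
case: ifP => _; [case: ifP => h; rewrite /= ?h //; move/negbT: h; rewrite -ltNge // |].
case: ifP => _; case: ifP => h; rewrite /= ?h //; move/negbT: h; by rewrite -ltNge.
Qed.


Lemma indep_ne x y (c0 c1 c2 : rat) : indep x y -> c1 != 0 ->
  ratr c0 + ratr c1 * x + ratr c2 * y != 0 :> R.
Proof. by move=> h hc; apply/eqP => /h [_ [/eqP]]; rewrite (negbTE hc). Qed.

Lemma step N r xy : Inv xy -> Inv (T N r xy) /\
  (forall M, Good (T N r xy) M -> Good xy (Amx R (eps N r xy) *m M)).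
Proof.
case: xy => x y [/= hx [hy [hs hind]]].
rewrite /T; have := eps_region N r x y; case: (eps N r (x, y)) => /= reg.
- have hne : 0 + 1 * x + (-1) * y != 0 :> R.
    by have := @indep_ne x y 0 1 (-1) hind isT; rewrite rmorph0 rmorph1 rmorphN1.
  have lt : y < x by rewrite lt_neqAle reg andbT; apply: contra_neq hne => ->; ring.
  have hD : 1 - y != 0 by rewrite gt_eqF // subr_gt0; lra.
  split.
    have [h1 [h2 h3]] := @frac_inv (1 - y) (x - y) y ltac:(lra) ltac:(lra) hy ltac:(lra).
    split=> //; split=> //; split=> //=.
    have -> : (x - y) / (1 - y) = (ratr 0 + ratr 1 * x + ratr (-1) * y) /
        (ratr 1 + ratr 0 * x + ratr (-1) * y) by rewrite rmorph0 rmorph1 rmorphN1; congr (_ / _); ring.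
    have -> : y / (1 - y) = (ratr 0 + ratr 0 * x + ratr 1 * y) /
        (ratr 1 + ratr 0 * x + ratr (-1) * y) by rewrite rmorph0 rmorph1 rmorphN1; congr (_ / _); ring.
    apply: indep_step => //; last by rewrite rmorph0 rmorph1 rmorphN1 gt_eqF //; lra.
    by move=> c0 c1 c2 *; lra.
  move=> M hG.
  apply: (@good_step _ _ _ _ _ _ _ _ _ (mx3 1 0 (-1) 0 1 (-1) 0 0 1) _ _ _ _ (1 / (1 - y)) _ _ _ _ _ _ _ hG).
  + mxcheck.
  + move=> m0 m1 m2 *; lra.
  + by rewrite divr_gt0 // subr_gt0; lra.
  + by field.
  + by field.
  + by field.
- have hD : 1 - x != 0 by rewrite gt_eqF //; lra.
  split.
    have [h1 [h2 h3]] := @frac_inv (1 - x) (x) (y - x) ltac:(lra) ltac:(lra) ltac:(lra) ltac:(lra).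
    split=> //; split=> //; split=> //=.
    have -> : (x) / (1 - x) = (ratr (0) + ratr (1) * x + ratr (0) * y) /
        (ratr (1) + ratr (-1) * x + ratr (0) * y) by rewrite ?rmorph0 ?rmorph1 ?rmorphN1 ?rmorph_nat; congr (_ / _); ring.
    have -> : (y - x) / (1 - x) = (ratr (0) + ratr (-1) * x + ratr (1) * y) /
        (ratr (1) + ratr (-1) * x + ratr (0) * y) by rewrite ?rmorph0 ?rmorph1 ?rmorphN1 ?rmorph_nat; congr (_ / _); ring.
    apply: indep_step => //; last by rewrite ?rmorph0 ?rmorph1 ?rmorphN1 ?rmorph_nat gt_eqF //; lra.
    by move=> c0 c1 c2 *; lra.
  move=> M hG.
  apply: (@good_step _ _ _ _ _ _ _ _ _ (mx3 1 (-1) 0 0 1 0 0 (-1) 1) _ _ _ _ (1 / (1 - x)) _ _ _ _ _ _ _ hG).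
  + mxcheck.
  + move=> m0 m1 m2 *; lra.
  + by rewrite divr_gt0 //; lra.
  + by field.
  + by field.
  + by field.
- have hne : -1 + 2 * x + 1 * y != 0 :> R.
    by have := @indep_ne x y (-1) (2) (1) hind isT; rewrite ?rmorph0 ?rmorph1 ?rmorphN1 ?rmorph_nat.
  have lt : 2 * x + y - 1 < 0 by rewrite lt_neqAle reg andbT; apply: contra_neq hne => h; lra.
  have hD : 1 - x != 0 by rewrite gt_eqF //; lra.
  split.
    have [h1 [h2 h3]] := @frac_inv (1 - x) (x) (y) ltac:(lra) ltac:(lra) ltac:(lra) ltac:(lra).
    split=> //; split=> //; split=> //=.
    have -> : (x) / (1 - x) = (ratr (0) + ratr (1) * x + ratr (0) * y) /
        (ratr (1) + ratr (-1) * x + ratr (0) * y) by rewrite ?rmorph0 ?rmorph1 ?rmorphN1 ?rmorph_nat; congr (_ / _); ring.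
    have -> : (y) / (1 - x) = (ratr (0) + ratr (0) * x + ratr (1) * y) /
        (ratr (1) + ratr (-1) * x + ratr (0) * y) by rewrite ?rmorph0 ?rmorph1 ?rmorphN1 ?rmorph_nat; congr (_ / _); ring.
    apply: indep_step => //; last by rewrite ?rmorph0 ?rmorph1 ?rmorphN1 ?rmorph_nat gt_eqF //; lra.
    by move=> c0 c1 c2 *; lra.
  move=> M hG.
  apply: (@good_step _ _ _ _ _ _ _ _ _ (mx3 1 (-1) 0 0 1 0 0 0 1) _ _ _ _ (1 / (1 - x)) _ _ _ _ _ _ _ hG).
  + mxcheck.
  + move=> m0 m1 m2 *; lra.
  + by rewrite divr_gt0 //; lra.
  + by field.
  + by field.
  + by field.
- have hD : x + y != 0 by rewrite gt_eqF //; lra.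
  split.
    have [h1 [h2 h3]] := @frac_inv (x + y) (2 * x + y - 1) (y) ltac:(lra) ltac:(lra) ltac:(lra) ltac:(lra).
    split=> //; split=> //; split=> //=.
    have -> : (2 * x + y - 1) / (x + y) = (ratr (-1) + ratr (2) * x + ratr (1) * y) /
        (ratr (0) + ratr (1) * x + ratr (1) * y) by rewrite ?rmorph0 ?rmorph1 ?rmorphN1 ?rmorph_nat; congr (_ / _); ring.
    have -> : (y) / (x + y) = (ratr (0) + ratr (0) * x + ratr (1) * y) /
        (ratr (0) + ratr (1) * x + ratr (1) * y) by rewrite ?rmorph0 ?rmorph1 ?rmorphN1 ?rmorph_nat; congr (_ / _); ring.
    apply: indep_step => //; last by rewrite ?rmorph0 ?rmorph1 ?rmorphN1 ?rmorph_nat gt_eqF //; lra.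
    by move=> c0 c1 c2 *; lra.
  move=> M hG.
  apply: (@good_step _ _ _ _ _ _ _ _ _ (mx3 0 1 1 (-1) 2 1 0 0 1) _ _ _ _ (1 / (x + y)) _ _ _ _ _ _ _ hG).
  + mxcheck.
  + move=> m0 m1 m2 *; lra.
  + by rewrite divr_gt0 //; lra.
  + by field.
  + by field.
  + by field.
- have hne : -1 + 1 * x + 2 * y != 0 :> R.
    by have := @indep_ne x y (-1) (1) (2) hind isT; rewrite ?rmorph0 ?rmorph1 ?rmorphN1 ?rmorph_nat.
  have lt : x + 2 * y - 1 < 0 by rewrite lt_neqAle reg andbT; apply: contra_neq hne => h; lra.
  have hD : 1 - y != 0 by rewrite gt_eqF //; lra.
  split.
    have [h1 [h2 h3]] := @frac_inv (1 - y) (x) (y) ltac:(lra) ltac:(lra) ltac:(lra) ltac:(lra).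
    split=> //; split=> //; split=> //=.
    have -> : (x) / (1 - y) = (ratr (0) + ratr (1) * x + ratr (0) * y) /
        (ratr (1) + ratr (0) * x + ratr (-1) * y) by rewrite ?rmorph0 ?rmorph1 ?rmorphN1 ?rmorph_nat; congr (_ / _); ring.
    have -> : (y) / (1 - y) = (ratr (0) + ratr (0) * x + ratr (1) * y) /
        (ratr (1) + ratr (0) * x + ratr (-1) * y) by rewrite ?rmorph0 ?rmorph1 ?rmorphN1 ?rmorph_nat; congr (_ / _); ring.
    apply: indep_step => //; last by rewrite ?rmorph0 ?rmorph1 ?rmorphN1 ?rmorph_nat gt_eqF //; lra.
    by move=> c0 c1 c2 *; lra.
  move=> M hG.
  apply: (@good_step _ _ _ _ _ _ _ _ _ (mx3 1 0 (-1) 0 1 0 0 0 1) _ _ _ _ (1 / (1 - y)) _ _ _ _ _ _ _ hG).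
  + mxcheck.
  + move=> m0 m1 m2 *; lra.
  + by rewrite divr_gt0 //; lra.
  + by field.
  + by field.
  + by field.
- have hD : x + y != 0 by rewrite gt_eqF //; lra.
  split.
    have [h1 [h2 h3]] := @frac_inv (x + y) (x) (x + 2 * y - 1) ltac:(lra) ltac:(lra) ltac:(lra) ltac:(lra).
    split=> //; split=> //; split=> //=.
    have -> : (x) / (x + y) = (ratr (0) + ratr (1) * x + ratr (0) * y) /
        (ratr (0) + ratr (1) * x + ratr (1) * y) by rewrite ?rmorph0 ?rmorph1 ?rmorphN1 ?rmorph_nat; congr (_ / _); ring.
    have -> : (x + 2 * y - 1) / (x + y) = (ratr (-1) + ratr (1) * x + ratr (2) * y) /
        (ratr (0) + ratr (1) * x + ratr (1) * y) by rewrite ?rmorph0 ?rmorph1 ?rmorphN1 ?rmorph_nat; congr (_ / _); ring.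
    apply: indep_step => //; last by rewrite ?rmorph0 ?rmorph1 ?rmorphN1 ?rmorph_nat gt_eqF //; lra.
    by move=> c0 c1 c2 *; lra.
  move=> M hG.
  apply: (@good_step _ _ _ _ _ _ _ _ _ (mx3 0 1 1 0 1 0 (-1) 1 2) _ _ _ _ (1 / (x + y)) _ _ _ _ _ _ _ hG).
  + mxcheck.
  + move=> m0 m1 m2 *; lra.
  + by rewrite divr_gt0 //; lra.
  + by field.
  + by field.
  + by field.
Qed.


Lemma Mn_succ N r xy n : Mn N r xy n.+1 = Amx R (eps N r xy) *m Mn N r (T N r xy) n.
Proof.
rewrite /Mn /=; congr (_ *m _).
rewrite -[1%N]/(1 + 0)%N iotaDl foldr_map.
elim: (iota 0 n) => //= k s ->.

by rewrite add0n -iterS iterSr.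
Qed.

Lemma good_base xy : Inv xy -> Good xy (Smx R).
Proof.
case: xy => x y [/= hx [hy [hs _]]].
split; [|split].
- apply: ord3_ind; rewrite !mxE /=; lra.
- exists (mx3 1 (-1) (-1) 0 1 0 0 0 1); rewrite /Smx; mxcheck.
- exists (fun j => nth 0 [:: 1 - x - y; x; y] j); split.
    apply: ord3_ind => /=; lra.
  rewrite !sum3 !mxE /=; split; [ring|split; ring].
Qed.

Lemma good_all N r xy n : Inv xy -> Good xy (Mn N r xy n).
Proof.
elim: n xy => [|n IH] xy hI; first exact: good_base.
rewrite Mn_succ; have [hI' hS] := step N r xy hI.
exact: hS (IH _ hI').
Qed.


Lemma near_pos (n0 n1 n2 a b : R) : 0 < n0 + n1 * a + n2 * b ->
  \forall z \near (a, b), 0 < n0 + n1 * z.1 + n2 * z.2.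
Proof.
move=> h.
have h1 : (fun z : R * R => z.1) @ (a, b) --> a by exact: cvg_fst.
have h2 : (fun z : R * R => z.2) @ (a, b) --> b by exact: cvg_snd.
have h3 : (fun z : R * R => n0 + n1 * z.1 + n2 * z.2) @ (a, b) --> n0 + n1 * a + n2 * b.
  apply: cvgD; [apply: cvgD|].
  - exact: cvg_cst.
  - exact: cvgMr.
  - exact: cvgMr.
exact: (cvgr_gt _ h3 _ h).
Qed.

Definition vz (z : R * R) : 'cV[R]_3 := \col_(k < 3) nth 0 [:: 1; z.1; z.2] k.

Lemma good_interior x y M : Good (x, y) M -> interior (triangle M) (x, y).
Proof.
move=> [hM [[B hB] [cc [hc [s0 [s1 s2]]]]]].
have hMB : M *m B = 1%:M by apply: mulmx1C.
have pos : forall j, 0 < M 0 j.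
  move=> j; have [p1 [p2 p3]] := hM j.
  rewrite lt_neqAle (le_trans _ p3) ?addr_ge0 // andbT; apply/negP => /eqP h0.
  have z1 : M 1 j = 0 by lra.
  have z2 : M 2%:R j = 0 by lra.
  have := congr1 (fun A : 'M[R]_3 => A j j) hB; rewrite !mxE sum3 -h0 z1 z2 eqxx /= !mulr0 !addr0.
  by move=> /esym/eqP; rewrite oner_eq0.
pose f j z := (B *m vz z) j 0.
have fE : forall j z, f j z = B j 0 + B j 1 * z.1 + B j 2%:R * z.2.
  by move=> j z; rewrite /f !mxE sum3 !mxE /= mulr1.
have Mf : forall k z, \sum_j M k j * f j z = nth 0 [:: 1; z.1; z.2] k.
  move=> k z; have := mulmxA M B (vz z); rewrite hMB mul1mx => /(congr1 (fun A : 'cV[R]_3 => A k 0)).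
  by rewrite !mxE => ->.
have fcc : forall j, f j (x, y) = cc j.
  pose C : 'cV[R]_3 := \col_j cc j.
  have MC : M *m C = vz (x, y).
    apply/matrixP => k l; rewrite !mxE sum3 !mxE; move: k; apply: ord3_ind => /=.
    - by rewrite sum3 in s0.
    - by rewrite sum3 in s1.
    - by rewrite sum3 in s2.
  have h : B *m vz (x, y) = C by rewrite -MC mulmxA hB mul1mx.
  by move=> j; rewrite /f h mxE.
have near_j : forall j, \forall z \near (x, y), 0 < f j z.
  move=> j; have e := fE j (x, y); rewrite fcc /= in e.
  have := @near_pos (B j 0) (B j 1) (B j 2%:R) x y.
  rewrite -e => /(_ (hc j)); apply: filterS => z; by rewrite fE.
change (nbhs (x, y) (triangle M)).
have FF : Filter (nbhs (x, y)) by apply: nbhs_filter.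
have H := @filterI _ _ FF _ _ (near_j 0) (@filterI _ _ FF _ _ (near_j 1) (near_j 2%:R)).
move: H; apply: filterS => z [h0 [h1 h2]].
have hz : forall j, 0 < f j z by apply: ord3_ind.
exists (fun i => f i z * M 0 i); split; first by move=> i; apply/ltW/mulr_gt0.
split.
  rewrite (eq_bigr (fun i => M 0 i * f i z)) => [|i _]; last by rewrite mulrC.
  exact: (Mf 0 z).
case: z {h0 h1 h2} hz => z1 z2 hz; rewrite /vertex /=; congr pair.
  rewrite (eq_bigr (fun i => M 1 i * f i (z1, z2))) => [|i _].
    by rewrite (Mf 1 (z1, z2)).
  have := pos i; rewrite lt0r => /andP [hi _]; by field.
rewrite (eq_bigr (fun i => M 2%:R i * f i (z1, z2))) => [|i _].
  by rewrite (Mf 2%:R (z1, z2)).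
have := pos i; rewrite lt0r => /andP [hi _]; by field.
Qed.

End S.

Theorem theorem2p5 (R : realType) (K : set R) (N : R -> R) (p q : nat)
  (hK : real_cubic_field K) (hN : is_norm K N)
  (hp : (0 < p)%N) (hq : (0 < q)%N) (hpq : coprime p q) (h3 : ~~ (3 %| p)%N)
  (a b : R) (hab : DeltaK K a b) (n : nat) :
  delta_n N (p%:R / q%:R) (a, b) n (a, b).
Proof.
case: hab => _ [_ [hind [ha [hb hs]]]].
apply: good_interior; apply: good_all.
by split=> //; split=> //; split.
Qed.
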